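(* The lattice $L=-A_1+A_2+2E_8$ is achiral, i.e., for some cell $P$ of $\Lambda(L)$ there is an automorphism $g$ of $L$ with $g(P)=P$ which is $P$-reversing and $\mathbb{Z}/3$-direct.
   Context: $-A_1$ is the rank one lattice generated by a vector of square $-2$; $A_2$, $E_8$ are positive definite root lattices; $+$ denotes orthogonal sum. For $L$: $V_k=\{v\in L:v^2=k,\ 2vw/v^2\in\mathbb{Z}\ \forall w\in L\}$ ($k=2,6$); $\Lambda(L)=\{x\in L\otimes\mathbb{R}: x^2<0\}/\mathbb{R}^*$; cells are closures of components of the complement in $\Lambda(L)$ of the hyperplanes $v^\perp$, $v\in V_2\cup V_6$. A cell $P$ lifts to two opposite pieces $\pm P^\sharp$ in $\{x^2<0\}/\mathbb{R}_{>0}$; $g$ with $g(P)=P$ is $P$-reversing if $g(P^\sharp)=-P^\sharp$. $g$ is $\mathbb{Z}/3$-direct if it acts trivially on the $3$-primary part (here $\mathbb{Z}/3$) of the discriminant group $L^*/L$. *)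

(* Defs.v *)
From HB Require Import structures.
From mathcomp Require Import all_boot all_order all_algebra.
From mathcomp Require Import all_classical all_reals all_analysis.
Set Implicit Arguments. Unset Strict Implicit. Unset Printing Implicit Defensive.
Import Order.TTheory GRing.Theory Num.Theory.
Import numFieldNormedType.Exports.
Local Open Scope classical_set_scope.
Local Open Scope ring_scope.

Definition rk : nat := 19.

(* E_8 Cartan (Gram) matrix, Bourbaki numbering (0-based):
   edges 1-3, 3-4, 4-5, 5-6, 6-7, 7-8, 2-4 *)
Definition e8_edge (a b : nat) : bool :=
  ((a, b) \in [:: (0, 2); (2, 3); (3, 4); (4, 5); (5, 6); (6, 7); (1, 3)]%N) ||
  ((b, a) \in [:: (0, 2); (2, 3); (3, 4); (4, 5); (5, 6); (6, 7); (1, 3)]%N).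

Definition e8 (a b : nat) : int :=
  if a == b then 2 else if e8_edge a b then -1 else 0.

(* Gram matrix entries of L in the basis: index 0 = -A_1, 1..2 = A_2,
   3..10 = first E_8, 11..18 = second E_8 *)
Definition gramL_entry (i j : nat) : int :=
  if (i == 0%N) && (j == 0%N) then -2
  else if [&& (1 <= i <= 2)%N & (1 <= j <= 2)%N] then (if i == j then 2 else -1)
  else if [&& (3 <= i <= 10)%N & (3 <= j <= 10)%N] then e8 (i - 3) (j - 3)
  else if [&& (11 <= i <= 18)%N & (11 <= j <= 18)%N] then e8 (i - 11) (j - 11)
  else 0.

Definition gramL : 'M[int]_rk := \matrix_(i, j) gramL_entry i j.

Definition bL (v w : 'rV[int]_rk) : int := (v *m gramL *m w^T) 0 0.

Definition V_k (k : int) (v : 'rV[int]_rk) : Prop :=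
  bL v v = k /\ forall w : 'rV[int]_rk, (k %| 2 * bL v w)%Z.

Definition Vroots (v : 'rV[int]_rk) : Prop := V_k 2 v \/ V_k 6 v.

(* Automorphisms of L: invertible integral matrices (acting on row vectors
   x |-> x *m g) preserving the form *)
Definition isAutL (g : 'M[int]_rk) : Prop :=
  g \in unitmx /\ g *m gramL *m g^T = gramL.

Section Real.
Variable R : realType.

Definition gramR : 'M[R]_rk := map_mx (fun z : int => z%:~R) gramL.
Definition bR (x y : 'rV[R]_rk) : R := (x *m gramR *m y^T) 0 0.
Definition intvR (v : 'rV[int]_rk) : 'rV[R]_rk := map_mx (fun z : int => z%:~R) v.

(* the (double) negative cone {x : x^2 < 0}; Lambda(L) is its quotient by R^* *)
Definition negcone : set 'rV[R]_rk := [set x | bR x x < 0].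

Definition mirrors : set 'rV[R]_rk :=
  [set x | exists v, Vroots v /\ bR (intvR v) x = 0].

Definition open_cells_lift : set 'rV[R]_rk := negcone `\` mirrors.

(* Lift P^# of a cell P: closure (relative to the negative cone) of a
   connected component of the complement of the mirrors in the negative cone.
   Such components are invariant under positive scaling, so P^# is a
   subset of {x^2<0} representing a subset of {x^2<0}/R_{>0}; the cell
   P = image of P^# in Lambda(L) corresponds to the R^*-invariant set
   P^# u -P^#. *)
Definition cell_lift (x0 : 'rV[R]_rk) : set 'rV[R]_rk :=
  closure (connected_component open_cells_lift x0) `&` negcone.

Definition cell_full (x0 : 'rV[R]_rk) : set 'rV[R]_rk :=
  cell_lift x0 `|` [set - x | x in cell_lift x0].

Definition actR (g : 'M[int]_rk) (x : 'rV[R]_rk) : 'rV[R]_rk :=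
  x *m map_mx (fun z : int => z%:~R) g.

End Real.

Definition ratv (v : 'rV[int]_rk) : 'rV[rat]_rk := map_mx (fun z : int => z%:~R) v.
Definition gramQ : 'M[rat]_rk := map_mx (fun z : int => z%:~R) gramL.
Definition integral_vec (x : 'rV[rat]_rk) : Prop := forall i, x 0 i \is a Num.int.
Definition inL (x : 'rV[rat]_rk) : Prop := integral_vec x.
Definition inLdual (x : 'rV[rat]_rk) : Prop := integral_vec (x *m gramQ^T).

(* g is Z/3-direct: acts trivially on the 3-primary part of L^*/L *)
Definition Z3_direct (g : 'M[int]_rk) : Prop :=
  forall x : 'rV[rat]_rk, inLdual x -> (exists k : nat, inL ((3 ^ k)%:R *: x)) ->
    inL (x *m map_mx (fun z : int => z%:~R) g - x).

(* Main.v *)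
Require Import Defs.
From HB Require Import structures.
From mathcomp Require Import all_boot all_order all_algebra.
From mathcomp Require Import all_classical all_reals all_analysis.
From mathcomp Require Import ring lra zify.
Import Order.TTheory GRing.Theory Num.Theory.
Import numFieldNormedType.Exports.
Local Open Scope classical_set_scope.
Local Open Scope ring_scope.

(* Proof idea: an explicit involution h of L (swapping two orthogonal E6
   sublattices, identity on the complement E6 + <-2>) with g = -h; the point
   x0 = y + sum eps^k w_k is fixed by h, negative, and lies on no mirror. *)

Definition e8f (c d : nat -> int) (o : nat) : int :=
  2 * c o * d o + 2 * c (o+1)%N * d (o+1)%N + 2 * c (o+2)%N * d (o+2)%N +
  2 * c (o+3)%N * d (o+3)%N + 2 * c (o+4)%N * d (o+4)%N + 2 * c (o+5)%N * d (o+5)%N +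
  2 * c (o+6)%N * d (o+6)%N + 2 * c (o+7)%N * d (o+7)%N
  - (c o * d (o+2)%N + c (o+2)%N * d o)
  - (c (o+2)%N * d (o+3)%N + c (o+3)%N * d (o+2)%N)
  - (c (o+3)%N * d (o+4)%N + c (o+4)%N * d (o+3)%N)
  - (c (o+4)%N * d (o+5)%N + c (o+5)%N * d (o+4)%N)
  - (c (o+5)%N * d (o+6)%N + c (o+6)%N * d (o+5)%N)
  - (c (o+6)%N * d (o+7)%N + c (o+7)%N * d (o+6)%N)
  - (c (o+1)%N * d (o+3)%N + c (o+3)%N * d (o+1)%N).

Definition Qf (c d : nat -> int) : int :=
  -2 * c 0%N * d 0%N + (2 * c 1%N * d 1%N - c 1%N * d 2%N - c 2%N * d 1%N + 2 * c 2%N * d 2%N)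
  + e8f c d 3 + e8f c d 11.
Definition gl : seq (seq int) := [:: [:: -217; -240; -120; -36; -54; -72; -108; -90; -72; -72; 0; 36; 54; 72; 108; 90; 72; 72; 0];
  [:: 180; 199; 100; 30; 45; 60; 90; 75; 60; 60; 0; -30; -45; -60; -90; -75; -60; -60; 0];
  [:: 0; 0; -1; 0; 0; 0; 0; 0; 0; 0; 0; 0; 0; 0; 0; 0; 0; 0; 0];
  [:: 0; 0; 0; 0; 0; 0; 0; 0; 0; 0; 0; -1; 0; 0; 0; 0; 0; 0; 0];
  [:: 0; 0; 0; 0; 0; 0; 0; 0; 0; 0; 0; 0; -1; 0; 0; 0; 0; 0; 0];
  [:: 0; 0; 0; 0; 0; 0; 0; 0; 0; 0; 0; 0; 0; -1; 0; 0; 0; 0; 0];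
  [:: 0; 0; 0; 0; 0; 0; 0; 0; 0; 0; 0; 0; 0; 0; -1; 0; 0; 0; 0];
  [:: 0; 0; 0; 0; 0; 0; 0; 0; 0; 0; 0; 0; 0; 0; 0; -1; 0; 0; 0];
  [:: -9; -10; -5; -2; -3; -4; -6; -5; -4; -3; 0; 2; 3; 4; 6; 5; 3; 3; 0];
  [:: 36; 40; 20; 6; 9; 12; 18; 15; 12; 11; 0; -6; -9; -12; -18; -15; -12; -12; 0];
  [:: -36; -40; -20; -6; -9; -12; -18; -15; -12; -12; -1; 6; 9; 12; 18; 15; 12; 12; 0];
  [:: 0; 0; 0; -1; 0; 0; 0; 0; 0; 0; 0; 0; 0; 0; 0; 0; 0; 0; 0];
  [:: 0; 0; 0; 0; -1; 0; 0; 0; 0; 0; 0; 0; 0; 0; 0; 0; 0; 0; 0];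
  [:: 0; 0; 0; 0; 0; -1; 0; 0; 0; 0; 0; 0; 0; 0; 0; 0; 0; 0; 0];
  [:: 0; 0; 0; 0; 0; 0; -1; 0; 0; 0; 0; 0; 0; 0; 0; 0; 0; 0; 0];
  [:: 0; 0; 0; 0; 0; 0; 0; -1; 0; 0; 0; 0; 0; 0; 0; 0; 0; 0; 0];
  [:: 9; 10; 5; 2; 3; 4; 6; 5; 3; 3; 0; -2; -3; -4; -6; -5; -4; -3; 0];
  [:: -36; -40; -20; -6; -9; -12; -18; -15; -12; -12; 0; 6; 9; 12; 18; 15; 12; 11; 0];
  [:: 36; 40; 20; 6; 9; 12; 18; 15; 12; 12; 0; -6; -9; -12; -18; -15; -12; -12; -1]].
Definition yl : seq int := [:: 45; 50; 24; 8; 12; 16; 24; 20; 16; 12; -2; -4; -6; -8; -12; -10; -8; -12; 0].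
Definition s1l : seq int := [:: 0; 0; 0; 1; 0; 0; 0; 0; 0; 0; 0; 1; 0; 0; 0; 0; 0; 0; 0].
Definition s2l : seq int := [:: 0; 0; 0; 0; 1; 0; 0; 0; 0; 0; 0; 0; 1; 0; 0; 0; 0; 0; 0].
Definition s3l : seq int := [:: 0; 0; 0; 0; 0; 1; 0; 0; 0; 0; 0; 0; 0; 1; 0; 0; 0; 0; 0].
Definition s4l : seq int := [:: 0; 0; 0; 0; 0; 0; 1; 0; 0; 0; 0; 0; 0; 0; 1; 0; 0; 0; 0].
Definition s5l : seq int := [:: 0; 0; 0; 0; 0; 0; 0; 1; 0; 0; 0; 0; 0; 0; 0; 1; 0; 0; 0].
Definition s6l : seq int := [:: 9; 10; 5; 2; 3; 4; 6; 5; 5; 3; 0; -2; -3; -4; -6; -5; -3; -3; 0].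
Definition d1l : seq int := [:: 0; 0; 0; 1; 0; 0; 0; 0; 0; 0; 0; -1; 0; 0; 0; 0; 0; 0; 0].
Definition d2l : seq int := [:: 0; 0; 0; 0; 1; 0; 0; 0; 0; 0; 0; 0; -1; 0; 0; 0; 0; 0; 0].
Definition d3l : seq int := [:: 0; 0; 0; 0; 0; 1; 0; 0; 0; 0; 0; 0; 0; -1; 0; 0; 0; 0; 0].
Definition d4l : seq int := [:: 0; 0; 0; 0; 0; 0; 1; 0; 0; 0; 0; 0; 0; 0; -1; 0; 0; 0; 0].
Definition d5l : seq int := [:: 0; 0; 0; 0; 0; 0; 0; 1; 0; 0; 0; 0; 0; 0; 0; -1; 0; 0; 0].
Definition d6l : seq int := [:: -9; -10; -5; -2; -3; -4; -6; -5; -3; -3; 0; 2; 3; 4; 6; 5; 3; 3; 0].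
Definition t1l : seq int := [:: 16; 18; 9; 2; 3; 4; 6; 5; 4; 3; -1; -2; -3; -4; -6; -5; -4; -5; -1].
Definition t2l : seq int := [:: 8; 9; 4; 0; 0; 0; 0; 0; 0; 0; -1; 0; 0; 0; 0; 0; 0; -1; 1].
Definition t3l : seq int := [:: -9; -10; -5; 0; 0; 0; 0; 0; 0; 0; 2; 2; 3; 4; 6; 5; 4; 4; 1].
Definition t4l : seq int := [:: 1; 1; 1; 0; 0; 0; 0; 0; 0; 0; -1; 0; 0; 0; 0; 0; 0; 0; 0].
Definition t5l : seq int := [:: 9; 10; 4; 2; 3; 4; 6; 5; 4; 3; 0; -2; -3; -4; -6; -5; -4; -4; -1].
Definition t6l : seq int := [:: 1; 1; 1; 0; 0; 0; 0; 0; 0; 0; 0; 0; 0; 0; 0; 0; 0; -1; 0].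
Definition lf (l : seq int) (c : nat -> int) : int := Qf c (fun k => nth 0 l k).
Definition Y := lf yl.
Definition S1 := lf s1l. Definition S2 := lf s2l. Definition S3 := lf s3l.
Definition S4 := lf s4l. Definition S5 := lf s5l. Definition S6 := lf s6l.
Definition D1 := lf d1l. Definition D2 := lf d2l. Definition D3 := lf d3l.
Definition D4 := lf d4l. Definition D5 := lf d5l. Definition D6 := lf d6l.
Definition T1 := lf t1l. Definition T2 := lf t2l. Definition T3 := lf t3l.
Definition T4 := lf t4l. Definition T5 := lf t5l. Definition T6 := lf t6l.
Definition qA (z1 z2 z3 z4 z5 z6 : int) : int :=
  4*z1*z1 + 6*z2*z2 + 10*z3*z3 + 18*z4*z4 + 10*z5*z5 + 4*z6*z6
  + 2*(3*z1*z2 + 5*z1*z3 + 6*z1*z4 + 4*z1*z5 + 2*z1*z6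
       + 6*z2*z3 + 9*z2*z4 + 6*z2*z5 + 3*z2*z6
       + 12*z3*z4 + 8*z3*z5 + 4*z3*z6
       + 12*z4*z5 + 6*z4*z6 + 5*z5*z6).
Definition nf1 (c : nat -> int) : int := (-2) * c 1%N + 1 * c 3%N + 6 * c 8%N.
Definition nf2 (c : nat -> int) : int := (-3) * c 1%N + 1 * c 4%N + 9 * c 8%N.
Definition nf3 (c : nat -> int) : int := (-4) * c 1%N + 1 * c 5%N + 12 * c 8%N.
Definition nf4 (c : nat -> int) : int := (-6) * c 1%N + 1 * c 6%N + 18 * c 8%N.
Definition nf5 (c : nat -> int) : int := (-5) * c 1%N + 1 * c 7%N + 15 * c 8%N.
Definition nf6 (c : nat -> int) : int := (-1) * c 1%N + 3 * c 8%N.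
Definition mutot (c : nat -> int) : int :=
  (Y c) * (((11 * 100 + 43)) * (Y c) + (-(15 * 100 + 0)) * (S1 c) + (-(22 * 100 + 50)) * (S2 c) + (-(30 * 100 + 0)) * (S3 c) + (-(45 * 100 + 0)) * (S4 c) + (-(37 * 100 + 50)) * (S5 c) + (-(29 * 100 + 10)) * (S6 c) + (-(21 * 100 + 84)) * (T1 c) + (-108) * (T2 c) + (-(73 * 100 + 56)) * (T3 c) + (-(60 * 100 + 48)) * (T4 c) + (-(52 * 100 + 80)) * (T5 c) + (-(23 * 100 + 16)) * (T6 c) + 360 * (nf5 c) + (-(5 * 100 + 4)) * (nf6 c))
  + (S1 c) * ((-(15 * 100 + 0)) * (Y c) + ((22 * 100 + 16)) * (S1 c) + ((33 * 100 + 6)) * (S2 c) + ((44 * 100 + 14)) * (S3 c) + ((66 * 100 + 12)) * (S4 c) + ((55 * 100 + 4)) * (S5 c) + ((42 * 100 + 76)) * (S6 c) + ((29 * 100 + 72)) * (T1 c) + (-180) * (T2 c) + ((105 * 100 + 40)) * (T3 c) + ((83 * 100 + 88)) * (T4 c) + ((73 * 100 + 88)) * (T5 c) + ((32 * 100 + 8)) * (T6 c) + (-36) * (nf1 c) + (-480) * (nf5 c) + ((5 * 100 + 28)) * (nf6 c))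
  + (S2 c) * ((-(22 * 100 + 50)) * (Y c) + ((33 * 100 + 6)) * (S1 c) + ((49 * 100 + 68)) * (S2 c) + ((66 * 100 + 12)) * (S3 c) + ((99 * 100 + 18)) * (S4 c) + ((82 * 100 + 56)) * (S5 c) + ((64 * 100 + 14)) * (S6 c) + ((44 * 100 + 58)) * (T1 c) + (-270) * (T2 c) + ((158 * 100 + 10)) * (T3 c) + ((125 * 100 + 82)) * (T4 c) + ((110 * 100 + 82)) * (T5 c) + ((48 * 100 + 12)) * (T6 c) + (-36) * (nf2 c) + (-(7 * 100 + 20)) * (nf5 c) + ((7 * 100 + 92)) * (nf6 c))
  + (S3 c) * ((-(30 * 100 + 0)) * (Y c) + ((44 * 100 + 14)) * (S1 c) + ((66 * 100 + 12)) * (S2 c) + ((88 * 100 + 28)) * (S3 c) + ((132 * 100 + 24)) * (S4 c) + ((110 * 100 + 8)) * (S5 c) + ((85 * 100 + 52)) * (S6 c) + ((59 * 100 + 44)) * (T1 c) + (-360) * (T2 c) + ((210 * 100 + 80)) * (T3 c) + ((167 * 100 + 76)) * (T4 c) + ((147 * 100 + 76)) * (T5 c) + ((64 * 100 + 16)) * (T6 c) + (-36) * (nf3 c) + (-(9 * 100 + 60)) * (nf5 c) + ((10 * 100 + 56)) * (nf6 c))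
  + (S4 c) * ((-(45 * 100 + 0)) * (Y c) + ((66 * 100 + 12)) * (S1 c) + ((99 * 100 + 18)) * (S2 c) + ((132 * 100 + 24)) * (S3 c) + ((198 * 100 + 36)) * (S4 c) + ((165 * 100 + 12)) * (S5 c) + ((128 * 100 + 28)) * (S6 c) + ((89 * 100 + 16)) * (T1 c) + (-(5 * 100 + 40)) * (T2 c) + ((316 * 100 + 20)) * (T3 c) + ((251 * 100 + 64)) * (T4 c) + ((221 * 100 + 64)) * (T5 c) + ((96 * 100 + 24)) * (T6 c) + (-36) * (nf4 c) + (-(14 * 100 + 40)) * (nf5 c) + ((15 * 100 + 84)) * (nf6 c))
  + (S5 c) * ((-(37 * 100 + 50)) * (Y c) + ((55 * 100 + 4)) * (S1 c) + ((82 * 100 + 56)) * (S2 c) + ((110 * 100 + 8)) * (S3 c) + ((165 * 100 + 12)) * (S4 c) + ((137 * 100 + 60)) * (S5 c) + ((106 * 100 + 90)) * (S6 c) + ((74 * 100 + 30)) * (T1 c) + (-450) * (T2 c) + ((263 * 100 + 50)) * (T3 c) + ((209 * 100 + 70)) * (T4 c) + ((184 * 100 + 70)) * (T5 c) + ((80 * 100 + 20)) * (T6 c) + (-(12 * 100 + 36)) * (nf5 c) + ((13 * 100 + 20)) * (nf6 c))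
  + (S6 c) * ((-(29 * 100 + 10)) * (Y c) + ((42 * 100 + 76)) * (S1 c) + ((64 * 100 + 14)) * (S2 c) + ((85 * 100 + 52)) * (S3 c) + ((128 * 100 + 28)) * (S4 c) + ((106 * 100 + 90)) * (S5 c) + ((83 * 100 + 12)) * (S6 c) + ((57 * 100 + 70)) * (T1 c) + (-360) * (T2 c) + ((204 * 100 + 80)) * (T3 c) + ((162 * 100 + 90)) * (T4 c) + ((143 * 100 + 50)) * (T5 c) + ((62 * 100 + 30)) * (T6 c) + (-(9 * 100 + 60)) * (nf5 c) + ((10 * 100 + 20)) * (nf6 c))
  + (T1 c) * ((-(21 * 100 + 84)) * (Y c) + ((29 * 100 + 72)) * (S1 c) + ((44 * 100 + 58)) * (S2 c) + ((59 * 100 + 44)) * (S3 c) + ((89 * 100 + 16)) * (S4 c) + ((74 * 100 + 30)) * (S5 c) + ((57 * 100 + 70)) * (S6 c) + ((42 * 100 + 32)) * (T1 c) + 54 * (T2 c) + ((144 * 100 + 82)) * (T3 c) + ((117 * 100 + 72)) * (T4 c) + ((103 * 100 + 4)) * (T5 c) + ((45 * 100 + 4)) * (T6 c) + (-(6 * 100 + 96)) * (nf5 c) + ((8 * 100 + 88)) * (nf6 c))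
  + (T2 c) * ((-108) * (Y c) + (-180) * (S1 c) + (-270) * (S2 c) + (-360) * (S3 c) + (-(5 * 100 + 40)) * (S4 c) + (-450) * (S5 c) + (-360) * (S6 c) + 54 * (T1 c) + 468 * (T2 c) + (-(5 * 100 + 40)) * (T3 c) + (-54) * (T4 c) + (-144) * (T5 c) + (-18) * (T6 c) + 216 * (nf6 c))
  + (T3 c) * ((-(73 * 100 + 56)) * (Y c) + ((105 * 100 + 40)) * (S1 c) + ((158 * 100 + 10)) * (S2 c) + ((210 * 100 + 80)) * (S3 c) + ((316 * 100 + 20)) * (S4 c) + ((263 * 100 + 50)) * (S5 c) + ((204 * 100 + 80)) * (S6 c) + ((144 * 100 + 82)) * (T1 c) + (-(5 * 100 + 40)) * (T2 c) + (((5 * 100 + 8) * 100 + 28)) * (T3 c) + ((407 * 100 + 16)) * (T4 c) + ((357 * 100 + 88)) * (T5 c) + ((155 * 100 + 72)) * (T6 c) + (-(24 * 100 + 0)) * (nf5 c) + ((27 * 100 + 12)) * (nf6 c))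
  + (T4 c) * ((-(60 * 100 + 48)) * (Y c) + ((83 * 100 + 88)) * (S1 c) + ((125 * 100 + 82)) * (S2 c) + ((167 * 100 + 76)) * (S3 c) + ((251 * 100 + 64)) * (S4 c) + ((209 * 100 + 70)) * (S5 c) + ((162 * 100 + 90)) * (S6 c) + ((117 * 100 + 72)) * (T1 c) + (-54) * (T2 c) + ((407 * 100 + 16)) * (T3 c) + ((329 * 100 + 40)) * (T4 c) + ((288 * 100 + 72)) * (T5 c) + ((126 * 100 + 0)) * (T6 c) + (-(19 * 100 + 44)) * (nf5 c) + ((23 * 100 + 76)) * (nf6 c))
  + (T5 c) * ((-(52 * 100 + 80)) * (Y c) + ((73 * 100 + 88)) * (S1 c) + ((110 * 100 + 82)) * (S2 c) + ((147 * 100 + 76)) * (S3 c) + ((221 * 100 + 64)) * (S4 c) + ((184 * 100 + 70)) * (S5 c) + ((143 * 100 + 50)) * (S6 c) + ((103 * 100 + 4)) * (T1 c) + (-144) * (T2 c) + ((357 * 100 + 88)) * (T3 c) + ((288 * 100 + 72)) * (T4 c) + ((253 * 100 + 40)) * (T5 c) + ((110 * 100 + 50)) * (T6 c) + (-(17 * 100 + 4)) * (nf5 c) + ((20 * 100 + 40)) * (nf6 c))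
  + (T6 c) * ((-(23 * 100 + 16)) * (Y c) + ((32 * 100 + 8)) * (S1 c) + ((48 * 100 + 12)) * (S2 c) + ((64 * 100 + 16)) * (S3 c) + ((96 * 100 + 24)) * (S4 c) + ((80 * 100 + 20)) * (S5 c) + ((62 * 100 + 30)) * (S6 c) + ((45 * 100 + 4)) * (T1 c) + (-18) * (T2 c) + ((155 * 100 + 72)) * (T3 c) + ((126 * 100 + 0)) * (T4 c) + ((110 * 100 + 50)) * (T5 c) + ((48 * 100 + 32)) * (T6 c) + (-(7 * 100 + 44)) * (nf5 c) + ((9 * 100 + 12)) * (nf6 c)).
Lemma id1 c : 6 * Qf c c = -3 * Y c ^+ 2 + qA (S1 c) (S2 c) (S3 c) (S4 c) (S5 c) (S6 c)
  + qA (D1 c) (D2 c) (D3 c) (D4 c) (D5 c) (D6 c) + 2 * qA (T1 c) (T2 c) (T3 c) (T4 c) (T5 c) (T6 c).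
Proof.
rewrite /Y /S1 /S2 /S3 /S4 /S5 /S6 /D1 /D2 /D3 /D4 /D5 /D6 /T1 /T2 /T3 /T4 /T5 /T6 /lf /qA /Qf /e8f /=.
ring.
Qed.

Definition nCn (c : nat -> int) : int :=
  let n1 := nf1 c in let n2 := nf2 c in let n3 := nf3 c in let n4 := nf4 c in let n5 := nf5 c in let n6 := nf6 c in
  2*(n1*n1+n2*n2+n3*n3+n4*n4+n5*n5+n6*n6) - 2*(n1*n3 + n3*n4 + n4*n5 + n5*n6 + n2*n4).

Lemma id2 c : 18 * Qf c c = 36 * nCn c + mutot c.
Proof.
rewrite /nCn /mutot /nf1 /nf2 /nf3 /nf4 /nf5 /nf6.
rewrite /Y /S1 /S2 /S3 /S4 /S5 /S6 /T1 /T2 /T3 /T4 /T5 /T6 /lf /Qf /e8f /=.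
ring.
Qed.


Lemma qA_ge0 z1 z2 z3 z4 z5 z6 : 0 <= qA z1 z2 z3 z4 z5 z6.
Proof.
have E : 20 * qA z1 z2 z3 z4 z5 z6 = 5*(4*z1+3*z2+5*z3+6*z4+4*z5+2*z6)^+2 + 3*(5*z2+3*z3+6*z4+4*z5+2*z6)^+2
  + 3*(4*z3+3*z4+2*z5+z6)^+2 + 5*(3*z4+2*z5+z6)^+2 + 10*(2*z5+z6)^+2 + 30*z6^+2.
  by rewrite /qA; ring.
have : 0 <= 20 * qA z1 z2 z3 z4 z5 z6.
  by rewrite E !addr_ge0 // mulr_ge0 // sqr_ge0.
by rewrite pmulr_rge0.
Qed.

Lemma qA_cs1 z1 z2 z3 z4 z5 z6 : 3 * (z1 * z1) <= 2 * qA z1 z2 z3 z4 z5 z6.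
Proof.
have E : qA (2*z1 - (2)*z1) (2*z2) (2*z3 - (-1)*z1) (2*z4) (2*z5) (2*z6) = 4 * qA z1 z2 z3 z4 z5 z6 - 6 * (z1 * z1) by rewrite /qA; ring.
have := qA_ge0 (2*z1 - (2)*z1) (2*z2) (2*z3 - (-1)*z1) (2*z4) (2*z5) (2*z6); rewrite E; lia.
Qed.

Lemma qA_cs2 z1 z2 z3 z4 z5 z6 : 3 * (z2 * z2) <= 2 * qA z1 z2 z3 z4 z5 z6.
Proof.
have E : qA (2*z1) (2*z2 - (2)*z2) (2*z3) (2*z4 - (-1)*z2) (2*z5) (2*z6) = 4 * qA z1 z2 z3 z4 z5 z6 - 6 * (z2 * z2) by rewrite /qA; ring.
have := qA_ge0 (2*z1) (2*z2 - (2)*z2) (2*z3) (2*z4 - (-1)*z2) (2*z5) (2*z6); rewrite E; lia.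
Qed.

Lemma qA_cs3 z1 z2 z3 z4 z5 z6 : 3 * (z3 * z3) <= 2 * qA z1 z2 z3 z4 z5 z6.
Proof.
have E : qA (2*z1 - (-1)*z3) (2*z2) (2*z3 - (2)*z3) (2*z4 - (-1)*z3) (2*z5) (2*z6) = 4 * qA z1 z2 z3 z4 z5 z6 - 6 * (z3 * z3) by rewrite /qA; ring.
have := qA_ge0 (2*z1 - (-1)*z3) (2*z2) (2*z3 - (2)*z3) (2*z4 - (-1)*z3) (2*z5) (2*z6); rewrite E; lia.
Qed.

Lemma qA_cs4 z1 z2 z3 z4 z5 z6 : 3 * (z4 * z4) <= 2 * qA z1 z2 z3 z4 z5 z6.
Proof.
have E : qA (2*z1) (2*z2 - (-1)*z4) (2*z3 - (-1)*z4) (2*z4 - (2)*z4) (2*z5 - (-1)*z4) (2*z6) = 4 * qA z1 z2 z3 z4 z5 z6 - 6 * (z4 * z4) by rewrite /qA; ring.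
have := qA_ge0 (2*z1) (2*z2 - (-1)*z4) (2*z3 - (-1)*z4) (2*z4 - (2)*z4) (2*z5 - (-1)*z4) (2*z6); rewrite E; lia.
Qed.

Lemma qA_cs5 z1 z2 z3 z4 z5 z6 : 3 * (z5 * z5) <= 2 * qA z1 z2 z3 z4 z5 z6.
Proof.
have E : qA (2*z1) (2*z2) (2*z3) (2*z4 - (-1)*z5) (2*z5 - (2)*z5) (2*z6 - (-1)*z5) = 4 * qA z1 z2 z3 z4 z5 z6 - 6 * (z5 * z5) by rewrite /qA; ring.
have := qA_ge0 (2*z1) (2*z2) (2*z3) (2*z4 - (-1)*z5) (2*z5 - (2)*z5) (2*z6 - (-1)*z5); rewrite E; lia.
Qed.

Lemma qA_cs6 z1 z2 z3 z4 z5 z6 : 3 * (z6 * z6) <= 2 * qA z1 z2 z3 z4 z5 z6.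
Proof.
have E : qA (2*z1) (2*z2) (2*z3) (2*z4) (2*z5 - (-1)*z6) (2*z6 - (2)*z6) = 4 * qA z1 z2 z3 z4 z5 z6 - 6 * (z6 * z6) by rewrite /qA; ring.
have := qA_ge0 (2*z1) (2*z2) (2*z3) (2*z4) (2*z5 - (-1)*z6) (2*z6 - (2)*z6); rewrite E; lia.
Qed.

Lemma nCn_even c : exists k, nCn c = 2 * k.
Proof.
exists ((nf1 c*nf1 c+nf2 c*nf2 c+nf3 c*nf3 c+nf4 c*nf4 c+nf5 c*nf5 c+nf6 c*nf6 c)
  - (nf1 c*nf3 c + nf3 c*nf4 c + nf4 c*nf5 c + nf5 c*nf6 c + nf2 c*nf4 c)).
by rewrite /nCn; ring.
Qed.
Section Eps.
Variable R : realType.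
Definition sumeps (l : seq int) : R := foldr (fun x acc => (x%:~R + acc) / 10) 0 l.

Lemma sumeps_bound (B : int) l : 0 <= B -> (forall x, x \in l -> `|x| <= B) ->
  `|sumeps l| <= B%:~R / 9.
Proof.
move=> B0; elim: l => [|x l IH] H /=.
  by rewrite normr0 divr_ge0 // ler0z.
have hx : `|x%:~R : R| <= B%:~R by rewrite -intr_norm ler_int H // mem_head.
have hl : `|sumeps l| <= B%:~R / 9.
  by apply: IH => z zl; apply: H; rewrite in_cons zl orbT.
rewrite normrM normfV (ger0_norm (_ : (0:R) <= 10)) //.
have := ler_normD (x%:~R : R) (sumeps l).
move: hx hl; set a := `|_|; set b := `|_|; set c := `|_ + _|.
move=> hx hl hc.
rewrite ler_pdivrMr //; lra.
Qed.

Lemma sumeps0 l : (forall x, x \in l -> `|x| <= 4) -> sumeps l = 0 ->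
  forall x, x \in l -> x = 0.
Proof.
elim: l => [|x l IH] H //= h0 z.
have hl : forall z, z \in l -> `|z| <= 4 by move=> w wl; apply: H; rewrite in_cons wl orbT.
have hb := @sumeps_bound 4 l isT hl.
have e : (x%:~R : R) = - sumeps l.
  by move: h0; lra.
have hx : `|x| < 1.
  rewrite -(ltr_int R) intr_norm e normrN.
  by apply: le_lt_trans hb _; lra.
have x0 : x = 0 by move: hx; lia.
have sl0 : sumeps l = 0 by move: e; rewrite x0 /=; lra.
rewrite in_cons => /orP[/eqP -> //|zl].
exact: IH.
Qed.
End Eps.

Lemma sq_abs_bound (s y : int) (k : int) : 0 <= k -> s * s <= (k * k) * (y * y) -> `|s| <= k * `|y|.
Proof.
move=> k0 h.
rewrite -(@ler_pXn2r _ 2%N) ?nnegrE ?mulr_ge0 //.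
by rewrite exprMn !real_normK ?num_real // !expr2.
Qed.

Lemma abs4 (s : int) : s * s <= 24 -> `|s| <= 4.
Proof. move=> h; nia. Qed.
Lemma sq_ge1 (y : int) : y != 0 -> 1 <= y * y.
Proof. move=> h; nia. Qed.

Lemma core (R : realType) c : (Qf c c = 2 \/ Qf c c = 6) ->
  (Y c)%:~R + sumeps R [:: S1 c; S2 c; S3 c; S4 c; S5 c; S6 c; T1 c; T2 c; T3 c; T4 c; T5 c; T6 c] != 0.
Proof.
move=> hQ; apply/eqP => h0.
have h1 := id1 c.
move: h0 h1.
set Q := Qf c c.
set y := Y c.
set s1 := S1 c. set s2 := S2 c. set s3 := S3 c. set s4 := S4 c. set s5 := S5 c. set s6 := S6 c.
set t1 := T1 c. set t2 := T2 c. set t3 := T3 c. set t4 := T4 c. set t5 := T5 c. set t6 := T6 c.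
set d1 := D1 c. set d2 := D2 c. set d3 := D3 c. set d4 := D4 c. set d5 := D5 c. set d6 := D6 c.
move=> h0 h1.
have qD := qA_ge0 d1 d2 d3 d4 d5 d6.
have qS := qA_ge0 s1 s2 s3 s4 s5 s6.
have qT := qA_ge0 t1 t2 t3 t4 t5 t6.
have cs1 := qA_cs1 s1 s2 s3 s4 s5 s6. have cs2 := qA_cs2 s1 s2 s3 s4 s5 s6.
have cs3 := qA_cs3 s1 s2 s3 s4 s5 s6. have cs4 := qA_cs4 s1 s2 s3 s4 s5 s6.
have cs5 := qA_cs5 s1 s2 s3 s4 s5 s6. have cs6 := qA_cs6 s1 s2 s3 s4 s5 s6.
have ct1 := qA_cs1 t1 t2 t3 t4 t5 t6. have ct2 := qA_cs2 t1 t2 t3 t4 t5 t6.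
have ct3 := qA_cs3 t1 t2 t3 t4 t5 t6. have ct4 := qA_cs4 t1 t2 t3 t4 t5 t6.
have ct5 := qA_cs5 t1 t2 t3 t4 t5 t6. have ct6 := qA_cs6 t1 t2 t3 t4 t5 t6.
move: h1 qD qS qT cs1 cs2 cs3 cs4 cs5 cs6 ct1 ct2 ct3 ct4 ct5 ct6.
set QS := qA s1 s2 s3 s4 s5 s6. set QT := qA t1 t2 t3 t4 t5 t6. set QD := qA d1 d2 d3 d4 d5 d6.
move=> h1 qD qS qT cs1 cs2 cs3 cs4 cs5 cs6 ct1 ct2 ct3 ct4 ct5 ct6.
have HQ : Q <= 6 by rewrite /Q; case: hQ => ->.
have yy : y ^+ 2 = y * y by rewrite expr2.
rewrite yy in h1.
have bs : forall s, 3 * (s * s) <= 2 * QS -> s * s <= 24 + 2 * (y * y) by move=> s hs; lia.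
have bt : forall t, 3 * (t * t) <= 2 * QT -> t * t <= 12 + y * y by move=> t ht; lia.
have [y0|y0] := eqVneq y 0.
-
  have b4 : forall s, s * s <= 24 + 2 * (y * y) -> `|s| <= 4.
    by move=> s; rewrite y0 => hs; apply: abs4; lia.
  have b4' : forall s, s * s <= 12 + y * y -> `|s| <= 4.
    by move=> s; rewrite y0 => hs; apply: abs4; lia.
  have Hl : forall x, x \in [:: s1; s2; s3; s4; s5; s6; t1; t2; t3; t4; t5; t6] -> `|x| <= 4.
    move=> x; rewrite !inE => /or4P[/eqP->|/eqP->|/eqP->|/or4P[/eqP->|/eqP->|/eqP->|/or4P[/eqP->|/eqP->|/eqP->|/or3P[/eqP->|/eqP->|/eqP->]]]];
    by [apply: b4; apply: bs | apply: b4'; apply: bt].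
  move: h0; rewrite y0 add0r => /(@sumeps0 R _ Hl) Z.
  have z1 : s1 = 0 by apply: Z; rewrite !inE eqxx ?orbT. have z2 : s2 = 0 by apply: Z; rewrite !inE eqxx ?orbT.
  have z3 : s3 = 0 by apply: Z; rewrite !inE eqxx ?orbT. have z4 : s4 = 0 by apply: Z; rewrite !inE eqxx ?orbT.
  have z5 : s5 = 0 by apply: Z; rewrite !inE eqxx ?orbT. have z6 : s6 = 0 by apply: Z; rewrite !inE eqxx ?orbT.
  have w1 : t1 = 0 by apply: Z; rewrite !inE eqxx ?orbT. have w2 : t2 = 0 by apply: Z; rewrite !inE eqxx ?orbT.
  have w3 : t3 = 0 by apply: Z; rewrite !inE eqxx ?orbT. have w4 : t4 = 0 by apply: Z; rewrite !inE eqxx ?orbT.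
  have w5 : t5 = 0 by apply: Z; rewrite !inE eqxx ?orbT. have w6 : t6 = 0 by apply: Z; rewrite !inE eqxx ?orbT.
  have h2 := id2 c; rewrite /mutot in h2.
  have [k hk] := nCn_even c.
  rewrite -/y -/s1 -/s2 -/s3 -/s4 -/s5 -/s6 -/t1 -/t2 -/t3 -/t4 -/t5 -/t6 in h2.
  rewrite y0 z1 z2 z3 z4 z5 z6 w1 w2 w3 w4 w5 w6 !mul0r !addr0 hk in h2.
  clear -h2 hQ; by case: hQ => hQ; rewrite hQ in h2; lia.
-
  have yge : 1 <= y * y by apply: sq_ge1.
  have b6 : forall s, s * s <= 24 + 2 * (y * y) -> `|s| <= 6 * `|y|.
    by move=> s hs; apply: sq_abs_bound => //; lia.
  have b6' : forall s, s * s <= 12 + y * y -> `|s| <= 6 * `|y|.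
    by move=> s hs; apply: sq_abs_bound => //; lia.
  have Hl : forall x, x \in [:: s1; s2; s3; s4; s5; s6; t1; t2; t3; t4; t5; t6] -> `|x| <= 6 * `|y|.
    move=> x; rewrite !inE => /or4P[/eqP->|/eqP->|/eqP->|/or4P[/eqP->|/eqP->|/eqP->|/or4P[/eqP->|/eqP->|/eqP->|/or3P[/eqP->|/eqP->|/eqP->]]]];
    by [apply: b6; apply: bs | apply: b6'; apply: bt].
  have hb : `|sumeps R [:: s1; s2; s3; s4; s5; s6; t1; t2; t3; t4; t5; t6]| <= (6 * `|y|)%:~R / 9.
    by apply: sumeps_bound => //; rewrite mulr_ge0.
  have ey : (y%:~R : R) = - sumeps R [:: s1; s2; s3; s4; s5; s6; t1; t2; t3; t4; t5; t6].
    by move: h0; lra.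
  have : `|(y%:~R : R)| <= (6 * `|y|)%:~R / 9 by rewrite ey normrN.
  rewrite intrM -intr_norm.
  have : (0 : R) < `|y|%:~R by rewrite ltr0z normr_gt0.
  lra.
Qed.

Definition cf (v : 'rV[int]_rk) (k : nat) : int := v 0 (inord k).

Lemma cfE (v : 'rV[int]_rk) (i : 'I_rk) : v 0 i = cf v i.
Proof. by rewrite /cf inord_val. Qed.

Lemma sum19 (F : nat -> int) : \sum_(i < rk) F i =
  F 0%N + F 1%N + F 2%N + F 3%N + F 4%N + F 5%N + F 6%N + F 7%N + F 8%N + F 9%N +
  F 10%N + F 11%N + F 12%N + F 13%N + F 14%N + F 15%N + F 16%N + F 17%N + F 18%N.
Proof.
rewrite -(big_mkord xpredT F) /index_iota /=.
rewrite !big_cons big_nil; ring.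
Qed.

Lemma bLE v w : bL v w = Qf (cf v) (cf w).
Proof.
rewrite /bL !mxE.
under eq_bigr do rewrite !mxE.
under eq_bigr do under eq_bigr do rewrite !mxE.
rewrite (eq_bigr (fun j : 'I_rk => (\sum_(i < rk) cf v i * gramL_entry i j) * cf w j)); last first.
  by move=> j _; rewrite cfE; congr (_ * _); apply: eq_bigr => i _; rewrite cfE.
rewrite (sum19 (fun j => (\sum_(i < rk) cf v i * gramL_entry i j) * cf w j)).
rewrite !(sum19 (fun i => cf v i * gramL_entry i _)).
rewrite /gramL_entry /e8 /e8_edge /=.
rewrite /Qf /e8f /=.
ring.
Qed.

Definition gtab (i j : nat) : int := nth 0 (nth [::] gl i) j.
Definition gM : 'M[int]_rk := \matrix_(i, j) gtab i j.

Definition gsum (c : nat -> int) (k : nat) : int :=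
  c 0%N * gtab 0 k + c 1%N * gtab 1 k + c 2%N * gtab 2 k + c 3%N * gtab 3 k + c 4%N * gtab 4 k +
  c 5%N * gtab 5 k + c 6%N * gtab 6 k + c 7%N * gtab 7 k + c 8%N * gtab 8 k + c 9%N * gtab 9 k +
  c 10%N * gtab 10 k + c 11%N * gtab 11 k + c 12%N * gtab 12 k + c 13%N * gtab 13 k +
  c 14%N * gtab 14 k + c 15%N * gtab 15 k + c 16%N * gtab 16 k + c 17%N * gtab 17 k +
  c 18%N * gtab 18 k.

Lemma cf_mulg (v : 'rV[int]_rk) k : (k < rk)%N -> cf (v *m gM) k = gsum (cf v) k.
Proof.
move=> hk; rewrite /cf !mxE.
rewrite (eq_bigr (fun i : 'I_rk => cf v i * gtab i k)); last first.
  by move=> i _; rewrite cfE mxE /= inordK.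
by rewrite (sum19 (fun i => cf v i * gtab i k)).
Qed.

Lemma bL_iso (v w : 'rV[int]_rk) : bL (v *m gM) (w *m gM) = bL v w.
Proof.
rewrite !bLE /Qf /e8f /=.
rewrite !cf_mulg //.
rewrite /gsum /gtab /=.
ring.
Qed.

Lemma gg (v : 'rV[int]_rk) : v *m gM *m gM = v.
Proof.
apply/rowP => j; rewrite -[_ 0 j]/(_ 0 (j : 'I_rk)) cfE [RHS]cfE.
have hj := ltn_ord j.
rewrite cf_mulg //. rewrite /gsum !cf_mulg //.
rewrite /gsum /gtab.
move: (nat_of_ord j) hj => k.
do 19 (case: k => [_|k]; first by rewrite /=; ring).
by [].
Qed.

Section Topo.
Variable R : realType.
Local Notation V := 'rV[R]_rk.

Lemma cont_sum (n : nat) (F : 'I_n -> V -> V) :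
  (forall i, continuous (F i)) -> continuous (fun x => \sum_(i < n) F i x).
Proof.
elim: n F => [|n IH] F H.
  under eq_fun do rewrite big_ord0.
  by move=> x; exact: cst_continuous.
rewrite (_ : (fun x => _) = (fun x => \sum_(i < n) F (widen_ord (leqnSn n) i) x) + F ord_max); last first.
  by apply/funext => x; rewrite big_ord_recr.
move=> x; apply: continuousD; last exact: H.
by apply: IH => i; exact: H.
Qed.

Lemma mulmx_continuous (M : 'M[R]_rk) : continuous (fun x : V => x *m M).
Proof.
have -> : (fun x : V => x *m M) = (fun x : V => \sum_(i < rk) x 0 i *: row i M).
  by apply/funext => x; rewrite mulmx_sum_row.
apply: cont_sum => i x.
apply: continuousZr_tmp.
exact: (@coord_continuous R 1 rk 0 i).
Qed.

Lemma cc_image (f : V -> V) (A : set V) x :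
  continuous f -> involutive f -> (forall z, A z -> A (f z)) ->
  f @` connected_component A x = connected_component A (f x).
Proof.
move=> cf fK fA.
have sub : forall y, f @` connected_component A y `<=` connected_component A (f y).
  move=> y; have [Ay|nAy] := pselect (A y); last first.
    by rewrite connected_component_out // image_set0.
  apply: connected_component_max.
  - by exists y => //; exact: connected_component_refl.
  - by move=> _ [z /connected_component_sub Az <-]; exact: fA.
  - apply: connected_continuous_connected; first exact: component_connected.
    exact: continuous_subspaceT.
apply/seteqP; split; first exact: sub.
move=> z hz; exists (f z); last exact: fK.
by have := sub (f x) (f z) (ex_intro2 _ _ z hz erefl); rewrite fK.
Qed.

Lemma closure_image (f : V -> V) (S : set V) :
  continuous f -> involutive f -> f @` closure S = closure (f @` S).
Proof.
move=> cf fK.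
have sub : forall S : set V, f @` closure S `<=` closure (f @` S).
  move=> T.
  have : closure T `<=` f @^-1` closure (f @` T).
    have /closure_id -> : closed (f @^-1` closure (f @` T)).
      by apply: preimage_closed => //; exact: closed_closure.
    apply: closureS => t Tt /=.
    by apply: subset_closure; exists t.
  by move=> h _ [t /h ht <-].
apply/seteqP; split; first exact: sub.
move=> z hz; exists (f z); last exact: fK.
have := sub (f @` S) (f z) (ex_intro2 _ _ z hz erefl).
have ffS : f @` (f @` S) = S.
  apply/seteqP; split => [_ [_ [s Ss <-] <-]|s Ss]; first by rewrite fK.
  by exists (f s); [exists s|rewrite fK].
by rewrite ffS.
Qed.
End Topo.

Definition mkv (l : seq int) : 'rV[int]_rk := \row_j nth 0 l j.

Lemma cf_mkv l k : (k < rk)%N -> cf (mkv l) k = nth 0 l k.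
Proof. by move=> hk; rewrite /cf mxE inordK. Qed.

Lemma Qf_ext c d d' : (forall k, (k < rk)%N -> d k = d' k) -> Qf c d = Qf c d'.
Proof. by move=> H; rewrite /Qf /e8f /= !H. Qed.

Lemma bL_mkv v l : bL v (mkv l) = lf l (cf v).
Proof. by rewrite bLE /lf; apply: Qf_ext => k hk; rewrite cf_mkv. Qed.

Lemma bL_sym v w : bL v w = bL w v.
Proof. by rewrite !bLE /Qf /e8f /=; ring. Qed.

Lemma entry_delta (K : comNzRingType) (M : 'M[K]_rk) i j :
  M i j = ((delta_mx 0 i : 'rV[K]_rk) *m M *m (delta_mx 0 j : 'rV[K]_rk)^T) 0 0.
Proof. by rewrite trmx_delta -rowE -colE !mxE. Qed.

Lemma gramL_sym : gramL^T = gramL.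
Proof.
apply/matrixP => i j; rewrite mxE [LHS]entry_delta [RHS]entry_delta.
by have := bL_sym (delta_mx 0 i) (delta_mx 0 j); rewrite /bL.
Qed.

Lemma gM_iso : gM *m gramL *m gM^T = gramL.
Proof.
apply/matrixP => i j; rewrite [LHS]entry_delta [RHS]entry_delta.
have := bL_iso (delta_mx 0 i) (delta_mx 0 j); rewrite /bL.
by rewrite trmx_mul !mulmxA.
Qed.

Lemma gM_inv : gM *m gM = 1%:M.
Proof.
apply/row_matrixP => i.
by rewrite row_mul rowE gg rowE mulmx1.
Qed.

Section RealPart.
Variable R : realType.
Local Notation iv := (intvR R).
Local Notation gR := (map_mx (fun z : int => z%:~R : R) gM).

Lemma bR_int v w : bR (iv v) (iv w) = (bL v w)%:~R.
Proof. by rewrite /bR /intvR /gramR map_trmx -!map_mxM mxE. Qed.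

Lemma bRD (x y z : 'rV[R]_rk) : bR x (y + z) = bR x y + bR x z.
Proof. by rewrite /bR linearD /= mulmxDr mxE. Qed.

Lemma bRZ (x : 'rV[R]_rk) (a : R) (y : 'rV[R]_rk) : bR x (a *: y) = a * bR x y.
Proof. by rewrite /bR linearZ /= -scalemxAr mxE. Qed.

Lemma bRN (x y : 'rV[R]_rk) : bR x (- y) = - bR x y.
Proof. by rewrite -scaleN1r bRZ mulN1r. Qed.

Lemma gramR_sym : (gramR R)^T = gramR R.
Proof. by rewrite /gramR map_trmx gramL_sym. Qed.

Lemma bR_sym (x y : 'rV[R]_rk) : bR x y = bR y x.
Proof.
rewrite /bR.
have -> : (x *m gramR R *m y^T) 0 0 = ((x *m gramR R *m y^T)^T) 0 0 by rewrite [RHS]mxE.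
by rewrite !trmx_mul trmxK gramR_sym mulmxA.
Qed.

Lemma gR_iso : gR *m gramR R *m gR^T = gramR R.
Proof. by rewrite /gramR map_trmx -!map_mxM gM_iso. Qed.

Lemma gR_inv : gR *m gR = 1%:M.
Proof. by rewrite -map_mxM gM_inv map_mx1. Qed.

Lemma bR_act (x y : 'rV[R]_rk) : bR (actR gM x) (actR gM y) = bR x y.
Proof.
rewrite /bR /actR trmx_mul.
have -> : x *m gR *m gramR R *m (gR^T *m y^T) = x *m (gR *m gramR R *m gR^T) *m y^T.
  by rewrite !mulmxA.
by rewrite gR_iso.
Qed.

Lemma actR_inv (x : 'rV[R]_rk) : actR gM (actR gM x) = x.
Proof. by rewrite /actR -mulmxA gR_inv mulmx1. Qed.

Lemma actR_int v : actR gM (iv v) = iv (v *m gM).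
Proof. by rewrite /actR /intvR map_mxM. Qed.

End RealPart.

Lemma fixneg l : (forall k, (k < rk)%N -> gsum (nth 0 l) k = - nth 0 l k) ->
  mkv l *m gM = - mkv l.
Proof.
move=> H; apply/rowP => j.
rewrite [LHS]cfE cf_mulg // [RHS]mxE cfE cf_mkv //.
rewrite -H //; rewrite /gsum !cf_mkv //.
Qed.

Ltac close19 := let k := fresh "k" in move=> k;
  do 19 (case: k => [_|k]; first by []); by [].

Lemma fy : mkv yl *m gM = - mkv yl. Proof. apply: fixneg; close19. Qed.
Lemma fs1 : mkv s1l *m gM = - mkv s1l. Proof. apply: fixneg; close19. Qed.
Lemma fs2 : mkv s2l *m gM = - mkv s2l. Proof. apply: fixneg; close19. Qed.
Lemma fs3 : mkv s3l *m gM = - mkv s3l. Proof. apply: fixneg; close19. Qed.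
Lemma fs4 : mkv s4l *m gM = - mkv s4l. Proof. apply: fixneg; close19. Qed.
Lemma fs5 : mkv s5l *m gM = - mkv s5l. Proof. apply: fixneg; close19. Qed.
Lemma fs6 : mkv s6l *m gM = - mkv s6l. Proof. apply: fixneg; close19. Qed.
Lemma ft1 : mkv t1l *m gM = - mkv t1l. Proof. apply: fixneg; close19. Qed.
Lemma ft2 : mkv t2l *m gM = - mkv t2l. Proof. apply: fixneg; close19. Qed.
Lemma ft3 : mkv t3l *m gM = - mkv t3l. Proof. apply: fixneg; close19. Qed.
Lemma ft4 : mkv t4l *m gM = - mkv t4l. Proof. apply: fixneg; close19. Qed.
Lemma ft5 : mkv t5l *m gM = - mkv t5l. Proof. apply: fixneg; close19. Qed.
Lemma ft6 : mkv t6l *m gM = - mkv t6l. Proof. apply: fixneg; close19. Qed.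

Definition wls : seq (seq int) := [:: s1l; s2l; s3l; s4l; s5l; s6l; t1l; t2l; t3l; t4l; t5l; t6l].
Definition ws : seq 'rV[int]_rk := map mkv wls.

Lemma ws_fix w : w \in ws -> w *m gM = - w.
Proof.
rewrite !inE => /or4P[/eqP->|/eqP->|/eqP->|/or4P[/eqP->|/eqP->|/eqP->|/or4P[/eqP->|/eqP->|/eqP->|/or3P[/eqP->|/eqP->|/eqP->]]]];
  by rewrite ?fs1 ?fs2 ?fs3 ?fs4 ?fs5 ?fs6 ?ft1 ?ft2 ?ft3 ?ft4 ?ft5 ?ft6.
Qed.

Lemma Qf_ext1 c c' d : (forall k, (k < rk)%N -> c k = c' k) -> Qf c d = Qf c' d.
Proof. by move=> H; rewrite /Qf /e8f /= !H. Qed.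

Lemma bL_mkv2 l l' : bL (mkv l) (mkv l') = Qf (nth 0 l) (nth 0 l').
Proof. by rewrite bL_mkv /lf; apply: Qf_ext1 => k hk; rewrite cf_mkv. Qed.

Lemma gram_ws : all (fun l => all (fun l' => `|Qf (nth 0 l) (nth 0 l')| <= 4) wls) wls.
Proof. by []. Qed.

Lemma y_ws : all (fun l => Qf (nth 0 yl) (nth 0 l) == 0) wls.
Proof. by []. Qed.

Lemma yy : Qf (nth 0 yl) (nth 0 yl) = -2.
Proof. by []. Qed.

Section X0.
Variable R : realType.
Local Notation iv := (intvR R).

Definition epsvec (l : seq 'rV[int]_rk) : 'rV[R]_rk :=
  foldr (fun w acc => 10^-1 *: (iv w + acc)) 0 l.

Definition x0 : 'rV[R]_rk := iv (mkv yl) + epsvec ws.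

Lemma bR0 (x : 'rV[R]_rk) : bR x 0 = 0.
Proof. by rewrite /bR trmx0 mulmx0 mxE. Qed.

Lemma bRDl (x y z : 'rV[R]_rk) : bR (x + y) z = bR x z + bR y z.
Proof. by rewrite bR_sym bRD !(bR_sym _ z). Qed.

Lemma bR_eps v l : bR (iv v) (epsvec l) = sumeps R (map (bL v) l).
Proof.
elim: l => [|w l IH] /=; first by rewrite bR0.
by rewrite bRZ bRD IH bR_int mulrC.
Qed.

Lemma act_eps l : (forall w, w \in l -> w *m gM = - w) -> actR gM (epsvec l) = - epsvec l.
Proof.
elim: l => [|w l IH] H /=; first by rewrite /actR mul0mx oppr0.
rewrite /actR -scalemxAl mulmxDl -/(actR gM _) -/(actR gM _) IH; last first.
  by move=> z zl; apply: H; rewrite in_cons zl orbT.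
rewrite actR_int H ?mem_head // /intvR map_mxN.
by rewrite -opprD scalerN.
Qed.

Lemma actRD (a b : 'rV[R]_rk) : actR gM (a + b) = actR gM a + actR gM b.
Proof. by rewrite /actR mulmxDl. Qed.

Lemma act_lin (a : 'rV[int]_rk) (e : 'rV[R]_rk) :
  a *m gM = - a -> actR gM e = - e -> actR gM (iv a + e) = - (iv a + e).
Proof. by move=> ha he; rewrite actRD actR_int ha he /intvR map_mxN opprD. Qed.

Lemma act_x0 : actR gM x0 = - x0.
Proof. rewrite /x0; exact: (act_lin _ _ fy (act_eps _ ws_fix)). Qed.

Lemma eps_sq l : (forall w w', w \in l -> w' \in l -> `|bL w w'| <= 4) ->
  `|bR (epsvec l) (epsvec l)| <= 1/20.
Proof.
elim: l => [|w l IH] H /=; first by rewrite bR0 normr0.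
set e := epsvec l.
have hww : `|bR (iv w) (iv w)| <= 4.
  rewrite bR_int -intr_norm.
  have := H w w (mem_head _ _) (mem_head _ _).
  by rewrite -(ler_int R).
have hwe : `|bR (iv w) e| <= 4 / 9.
  rewrite bR_eps.
  have := @sumeps_bound R 4 (map (bL w) l) isT.
  rewrite -[(4:int)%:~R]/(4 : R); apply=> z /mapP [w' w'l ->].
  by apply: H; rewrite ?mem_head // in_cons w'l orbT.
have hee : `|bR e e| <= 1/20.
  by apply: IH => a b al bl; apply: H; rewrite in_cons ?al ?bl orbT.
rewrite bRZ (bR_sym _ (10^-1 *: _)) bRZ bRD !bRDl (bR_sym _ e (iv w)).
move: hww hwe hee; set p := bR (iv w) (iv w); set q := bR (iv w) e; set r := bR e e.
rewrite !ler_norml => /andP[? ?] /andP[? ?] /andP[? ?].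
apply/andP; split; lra.
Qed.

Lemma x0_neg : negcone x0.
Proof.
rewrite /negcone /= /x0 bRDl bRD bRD bR_int.
rewrite (bR_sym _ (epsvec ws)) bR_eps.
have -> : map (bL (mkv yl)) ws = [:: 0; 0; 0; 0; 0; 0; 0; 0; 0; 0; 0; 0].
  rewrite /ws /wls /= !bL_mkv2.
  by [].
rewrite bL_mkv2 yy.
have : `|bR (epsvec ws) (epsvec ws)| <= 1/20.
  apply: eps_sq => w w'; rewrite /ws => /mapP[l ll ->] /mapP[l' l'l ->].
  rewrite bL_mkv2.
  by have /allP/(_ l ll)/allP/(_ l' l'l) := gram_ws.
rewrite ler_norml => /andP[_ h].
rewrite /sumeps /=.
lra.
Qed.

Lemma x0_nomirror : ~ mirrors x0.
Proof.
move=> [v [hv h0]].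
have hQ : Qf (cf v) (cf v) = 2 \/ Qf (cf v) (cf v) = 6.
  by rewrite -bLE; case: hv => [[-> _]|[-> _]]; [left|right].
have := core R (cf v) hQ.
move: h0; rewrite /x0 bRD bR_int bR_eps bL_mkv /ws /wls /= !bL_mkv.
by move=> ->; rewrite eqxx.
Qed.

Lemma x0_open : open_cells_lift x0.
Proof. by split; [exact: x0_neg | exact: x0_nomirror]. Qed.

End X0.

Lemma gMgM (v : 'rV[int]_rk) : v *m gM *m gM = v. Proof. exact: gg. Qed.

Lemma V_k_g k v : V_k k v -> V_k k (v *m gM).
Proof.
move=> [h1 h2]; split; first by rewrite bL_iso.
move=> w; rewrite -[w in bL _ w]gMgM bL_iso; exact: h2.
Qed.

Lemma Vroots_g v : Vroots v -> Vroots (v *m gM).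
Proof. by case=> h; [left|right]; apply: V_k_g. Qed.

Section Inv.
Variable R : realType.
Local Notation iv := (intvR R).
Local Notation V := 'rV[R]_rk.

Lemma negcone_act (x : V) : negcone (actR gM x) <-> negcone x.
Proof. by rewrite /negcone /= bR_act. Qed.

Lemma mirrors_act1 (x : V) : mirrors (actR gM x) -> mirrors x.
Proof.
move=> [v [hv h0]]; exists (v *m gM); split; first exact: Vroots_g.
by rewrite -actR_int -[x in bR _ x](actR_inv R x) bR_act.
Qed.

Lemma mirrors_act (x : V) : mirrors (actR gM x) <-> mirrors x.
Proof.
split; first exact: mirrors_act1.
by move=> h; apply: mirrors_act1; rewrite actR_inv.
Qed.

Lemma open_act (x : V) : open_cells_lift (actR gM x) -> open_cells_lift x.
Proof. by move=> [h1 h2]; split; [rewrite -negcone_act|rewrite -mirrors_act]. Qed.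

Lemma bRNl (x y : V) : bR (- x) y = - bR x y.
Proof. by rewrite bR_sym bRN bR_sym. Qed.

Lemma negcone_neg (x : V) : negcone (- x) <-> negcone x.
Proof. by rewrite /negcone /= bRN bRNl opprK. Qed.

Lemma mirrors_neg1 (x : V) : mirrors (- x) -> mirrors x.
Proof.
move=> [v [hv h0]]; exists v; split => //.
by move: h0; rewrite bRN => /eqP; rewrite oppr_eq0 => /eqP.
Qed.

Lemma open_neg (x : V) : open_cells_lift (- x) -> open_cells_lift x.
Proof.
move=> [h1 h2]; split; first by rewrite -negcone_neg.
by move=> h; apply: h2; apply: mirrors_neg1; rewrite opprK.
Qed.
End Inv.

Definition ztl : seq (seq int) := [:: [:: -218; -240; -120; -36; -54; -72; -108; -90; -72; -72; 0; 36; 54; 72; 108; 90; 72; 72; 0];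
  [:: 120; 132; 66; 20; 30; 40; 60; 50; 40; 40; 0; -20; -30; -40; -60; -50; -40; -40; 0];
  [:: 60; 66; 32; 10; 15; 20; 30; 25; 20; 20; 0; -10; -15; -20; -30; -25; -20; -20; 0];
  [:: 18; 20; 10; -4; -5; -7; -10; -8; -6; -2; -4; -4; -5; -7; -10; -8; -6; -6; 0];
  [:: 27; 30; 15; -5; -8; -10; -15; -12; -9; -3; -6; -5; -8; -10; -15; -12; -9; -9; 0];
  [:: 36; 40; 20; -7; -10; -14; -20; -16; -12; -4; -8; -7; -10; -14; -20; -16; -12; -12; 0];
  [:: 54; 60; 30; -10; -15; -20; -30; -24; -18; -6; -12; -10; -15; -20; -30; -24; -18; -18; 0];
  [:: 45; 50; 25; -8; -12; -16; -24; -20; -15; -5; -10; -8; -12; -16; -24; -20; -15; -15; 0];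
  [:: 36; 40; 20; -6; -9; -12; -18; -15; -12; -4; -8; -6; -9; -12; -18; -15; -12; -12; 0];
  [:: 36; 40; 20; -2; -3; -4; -6; -5; -4; 0; -6; -6; -9; -12; -18; -15; -12; -12; 0];
  [:: 0; 0; 0; -4; -6; -8; -12; -10; -8; -6; -4; 0; 0; 0; 0; 0; 0; 0; 0];
  [:: -18; -20; -10; -4; -5; -7; -10; -8; -6; -6; 0; -4; -5; -7; -10; -8; -6; -2; -4];
  [:: -27; -30; -15; -5; -8; -10; -15; -12; -9; -9; 0; -5; -8; -10; -15; -12; -9; -3; -6];
  [:: -36; -40; -20; -7; -10; -14; -20; -16; -12; -12; 0; -7; -10; -14; -20; -16; -12; -4; -8];
  [:: -54; -60; -30; -10; -15; -20; -30; -24; -18; -18; 0; -10; -15; -20; -30; -24; -18; -6; -12];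
  [:: -45; -50; -25; -8; -12; -16; -24; -20; -15; -15; 0; -8; -12; -16; -24; -20; -15; -5; -10];
  [:: -36; -40; -20; -6; -9; -12; -18; -15; -12; -12; 0; -6; -9; -12; -18; -15; -12; -4; -8];
  [:: -36; -40; -20; -6; -9; -12; -18; -15; -12; -12; 0; -2; -3; -4; -6; -5; -4; 0; -6];
  [:: 0; 0; 0; 0; 0; 0; 0; 0; 0; 0; 0; -4; -6; -8; -12; -10; -8; -6; -4]].
Definition ztab (j m : nat) : int := nth 0 (nth [::] ztl j) m.

Lemma sumR19 (V : nmodType) (F : nat -> V) :
  \sum_(i < rk) F i = foldr (fun i acc => F i + acc) 0 (iota 0 19).
Proof. by rewrite -(big_mkord xpredT F) /index_iota /= !big_cons big_nil. Qed.

Definition Pq (c : nat -> rat) (j : nat) : rat := \sum_(i < rk) c i * (gramL_entry j i)%:~R.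

Lemma xGq (x : 'rV[rat]_rk) j : (j < rk)%N ->
  (x *m gramQ^T) 0 (inord j) = Pq (fun i => x 0 (inord i)) j.
Proof.
move=> hj; rewrite !mxE /Pq; apply: eq_bigr => i _.
by rewrite !mxE inordK // inord_val.
Qed.

Definition gQ : 'M[rat]_rk := map_mx (fun z : int => z%:~R) gM.

Lemma xgq (x : 'rV[rat]_rk) m : (m < rk)%N ->
  (x *m gQ - x) 0 (inord m) =
  \sum_(i < rk) x 0 (inord i) * (gtab i m)%:~R - x 0 (inord m).
Proof.
move=> hm; rewrite !mxE; congr (_ - _); apply: eq_bigr => i _.
by rewrite !mxE /= inordK // inord_val.
Qed.

Lemma zid (c : nat -> rat) m : (m < rk)%N ->
  \sum_(i < rk) c i * (gtab i m)%:~R - c m =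
  c 0%N * (ztab 0 m)%:~R + foldr (fun j acc => Pq c j * (ztab j m)%:~R + acc) 0 (iota 1 18).
Proof.
rewrite (@sumR19 _ (fun i => c i * (gtab i m)%:~R)) /= /Pq.
rewrite !(@sumR19 _ (fun i => c i * (gramL_entry _ i)%:~R)) /=.
rewrite /gramL_entry /e8 /e8_edge /=.
move: m; do 19 (case=> [_|]; first by rewrite /ztab /gtab /=; ring).
by [].
Qed.

Lemma Pq0 c : Pq c 0 = - (2 * c 0%N).
Proof. by rewrite /Pq (@sumR19 _ (fun i => c i * (gramL_entry 0 i)%:~R)) /= /gramL_entry /=; ring. Qed.

Lemma odd_comb (y : rat) (t : nat) : y = (2 * t + 1)%N%:R * y + t%:R * - (2 * y).
Proof. rewrite natrD natrM. ring. Qed.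

Lemma Z3_gM : Z3_direct gM.
Proof.
move=> x hx [k hk] i.
have hP : forall j, (j < rk)%N -> Pq (fun i => x 0 (inord i)) j \is a Num.int.
  by move=> j hj; rewrite -xGq //; apply: hx.
have h0 : (x 0 (inord 0) : rat) \is a Num.int.
  have p0 := hP 0%N isT; rewrite Pq0 in p0.
  have q0 : (expn 3 k)%:R * (x 0 (inord 0) : rat) \is a Num.int.
    by have := hk (inord 0); rewrite mxE.
  have [t ht] : exists t, (3 ^ k = 2 * t + 1)%N.
    exists ((3 ^ k)./2); rewrite -[in LHS](odd_double_half (3 ^ k)) oddX /= orbT.
    by rewrite -muln2 addnC mulnC.
  have -> : (x 0 (inord 0) : rat) = (expn 3 k)%:R * (x 0 (inord 0) : rat) + t%:R * (- (2 * x 0 (inord 0))).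
    by rewrite ht; apply: odd_comb.
  by rewrite rpredD // rpredM // rpred_nat.
rewrite -(inord_val i) xgq // (zid (fun i => x 0 (inord i))) //=.
rewrite !(rpredD, rpredM, intr_int, hP) //.
Qed.

Section Cells.
Variable R : realType.
Local Notation V := 'rV[R]_rk.

Lemma cell_image (f : V -> V) x : continuous f -> involutive f ->
  (forall z, open_cells_lift (f z) -> open_cells_lift z) ->
  (forall z, negcone (f z) <-> negcone z) ->
  f @` cell_lift x = cell_lift (f x).
Proof.
move=> cf fK fo fn.
have fA : forall z, open_cells_lift z -> open_cells_lift (f z).
  by move=> z hz; apply: fo; rewrite fK.
rewrite /cell_lift -(@cc_image R f _ x cf fK fA) -(@closure_image R f _ cf fK).
apply/seteqP; split.
- by move=> _ [z [hz nz] <-]; split; [exists z | apply/fn].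
- move=> _ [[z hz <-] nz]; exists z => //; split => //; exact/fn.
Qed.

Lemma neg_continuous : continuous (fun x : V => - x).
Proof. by move=> x; apply: continuousN; exact: cvg_id. Qed.

Lemma act_continuous : continuous (actR gM : V -> V).
Proof. exact: mulmx_continuous. Qed.

Lemma actRN (x : V) : actR gM (- x) = - actR gM x.
Proof. by rewrite /actR mulNmx. Qed.
End Cells.

Theorem corollary7p6p2 (R : realType) :
  exists (x0 : 'rV[R]_rk) (g : 'M[int]_rk),
    open_cells_lift x0 /\ isAutL g /\
    actR g @` cell_full x0 = cell_full x0 /\
    actR g @` cell_lift x0 = [set - x | x in cell_lift x0] /\
    Z3_direct g.
Proof.
exists (x0 R), gM.
have hact : actR gM @` cell_lift (x0 R) = cell_lift (- x0 R).
  rewrite cell_image; first by rewrite act_x0.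
  - exact: act_continuous.
  - exact: actR_inv.
  - exact: open_act.
  - exact: negcone_act.
have hneg : [set - x | x in cell_lift (x0 R)] = cell_lift (- x0 R).
  rewrite (@cell_image R (fun x : 'rV[R]_rk => - x) (x0 R)) //.
  - exact: neg_continuous.
  - exact: opprK.
  - exact: open_neg.
  - exact: negcone_neg.
split; first exact: x0_open.
split; first by split; [exact: (mulmx1_unit gM_inv).1 | exact: gM_iso].
split.
  rewrite /cell_full image_setU [in RHS]hneg.
  have -> : actR gM @` [set - x | x in cell_lift (x0 R)] =
            [set - x | x in actR gM @` cell_lift (x0 R)].
    apply/seteqP; split => _ [_ [z hz <-] <-].
      by exists (actR gM z); [exists z | rewrite actRN].
    by exists (- z); [exists z | rewrite actRN].
  have nQ : [set - x | x in cell_lift (- x0 R)] = cell_lift (x0 R).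
    rewrite -hneg; apply/seteqP; split => [_ [_ [z hz <-] <-]|z hz]; first by rewrite opprK.
    by exists (- z); [exists z | rewrite opprK].
  by rewrite hact nQ setUC.
split; first by rewrite hact hneg.
exact: Z3_gM.
Qed.
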